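(* Let $\langle A, \leq, \otimes, \ominus, \mathbf{1}\rangle$ be a residuated partially ordered monoid with bottom element $\bot$, let $k\geq 1$ and $a = a_1\ldots a_k$, $b = b_1\ldots b_k \in Lex_k(A)$. If $\delta(a,b) = \gamma(a,b) = k+1$, then the residuation $a \ominus_k b$ of $a$ by $b$ in $\langle Lex_k(A), \leq_k, \otimes^k, \mathbf{1}^k\rangle$ exists and equals $(a_1 \ominus b_1) \ldots (a_k \ominus b_k)$; that is, this tuple lies in $Lex_k(A)$ and for every $c \in Lex_k(A)$, $b \otimes^k c \leq_k a$ iff $c \leq_k (a_1 \ominus b_1) \ldots (a_k \ominus b_k)$.
   Context: A residuated partially ordered monoid $\langle A, \leq, \otimes, \ominus, \mathbf{1}\rangle$ consists of a partial order $\langle A,\leq\rangle$, a commutative monoid $\langle A,\otimes,\mathbf{1}\rangle$, and a binary operation $\ominus$ with $b \otimes c \leq a$ iff $c \leq a \ominus b$ for all $a,b,c\in A$. $a<b$ means $a\leq b$, $a\neq b$. $I(A) = \{c \in A \mid \forall a,b \in A.\ a \otimes c = b \otimes c \Rightarrow a = b\}$, $C(A)=A\setminus I(A)$. $Lex_k(A)\subseteq A^k$: $Lex_1(A) = A$, $Lex_{k+1}(A) = I(A)\, Lex_k(A) \cup C(A)\{\bot\}^k$ (concatenations of sequences; $\{\bot\}^k$ the singleton of $k$ copies of $\bot$). The order $\leq_k$: $\leq_1=\leq$, and for $k\geq2$, $a_1 \ldots a_k \leq_k b_1 \ldots b_k$ iff $a_1 < b_1$, or $a_1 = b_1$ and $a_2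 \ldots a_k \leq_{k-1} b_2 \ldots b_k$. $\otimes^k$ is componentwise, $\mathbf{1}^k=\mathbf{1}\ldots\mathbf{1}$. For $a,b\in Lex_k(A)$: $\gamma(a,b) = \min\{ i \mid a_i \ominus b_i \in C(A)\}$ and $\delta(a,b) = \min\{ i \mid (a_i \ominus b_i) \otimes b_i < a_i\}$, each equal to $k+1$ if the set is empty. *)

(* Defs.v *)
From mathcomp Require Import all_boot.
From mathcomp Require Import boolp.
Set Implicit Arguments. Unset Strict Implicit. Unset Printing Implicit Defensive.

Record rpom := RPOM {
  car :> Type;
  le : car -> car -> Prop;
  mul : car -> car -> car;
  res : car -> car -> car;
  one : car;
  bot : car;
  le_refl : forall x, le x x;
  le_antisym : forall x y, le x y -> le y x -> x = y;
  le_trans : forall x y z, le x y -> le y z -> le x z;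
  mulA : forall x y z, mul x (mul y z) = mul (mul x y) z;
  mulC : forall x y, mul x y = mul y x;
  mul1 : forall x, mul one x = x;
  residuation : forall a b c, le (mul b c) a <-> le c (res a b);
  bot_le : forall x, le bot x
}.

Section Lex.
Variable A : rpom.

Definition lt (x y : A) : Prop := le x y /\ x <> y.

Definition Icanc (c : A) : Prop := forall a b : A, mul a c = mul b c -> a = b.
Definition Cnon (c : A) : Prop := ~ Icanc c.

(* Lex k A as a predicate on sequences; Lex_0 is not used (empty). *)
Fixpoint Lex (k : nat) (s : seq A) : Prop :=
  match k with
  | 0 => False
  | S k' =>
    match k' with
    | 0 => exists x, s = [:: x]
    | _ => exists c t, s = c :: t /\
            ((Icanc c /\ Lex k' t) \/ (Cnon c /\ t = nseq k' (bot A)))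
    end
  end.

Fixpoint lexle (k : nat) (a b : seq A) : Prop :=
  match k with
  | 0 => False
  | S k' =>
    match a, b with
    | x :: a', y :: b' =>
      match k' with
      | 0 => le x y
      | _ => lt x y \/ (x = y /\ lexle k' a' b')
      end
    | _, _ => False
    end
  end.

Definition mulk (a b : seq A) : seq A := [seq mul p.1 p.2 | p <- zip a b].
Definition resk (a b : seq A) : seq A := [seq res p.1 p.2 | p <- zip a b].

(* gamma(a,b) = min { i | a_i ⊖ b_i ∈ C(A) } (1-based), k+1 if none *)
Definition gamma (a b : seq A) : nat :=
  (find (fun p : A * A => `[< Cnon (res p.1 p.2) >]) (zip a b)).+1.

(* delta(a,b) = min { i | (a_i ⊖ b_i) ⊗ b_i < a_i } (1-based), k+1 if none *)
Definition delta (a b : seq A) : nat :=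
  (find (fun p : A * A => `[< lt (mul (res p.1 p.2) p.2) p.1 >]) (zip a b)).+1.

End Lex.

(* Main.v *)
Require Import Defs.
From mathcomp Require Import all_boot.
From mathcomp Require Import boolp.
From Stdlib Require Import Classical.

Section S.
Variable A : rpom.

Fixpoint good (a b : seq A) : Prop :=
  match a, b with
  | x :: a', y :: b' => Icanc (Defs.res x y) /\ Defs.mul (Defs.res x y) y = x /\ good a' b'
  | _, _ => True
  end.

Fixpoint plex (s t : seq A) : Prop :=
  match s, t with
  | x :: s', y :: t' => Defs.le x y /\ plex s' t'
  | [::], [::] => True
  | _, _ => False
  end.

Lemma Lex_size k (s : seq A) : Lex k.+1 s -> size s = k.+1.
Proof.
elim: k s => [|k IH] s /=; first by case=> x ->.
case=> c [t [-> [[_ H]|[_ ->]]]] /=; first by rewrite IH.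
by rewrite size_nseq.
Qed.

Lemma mul_bot (z : A) : Defs.mul (Defs.bot A) z = Defs.bot A.
Proof.
apply: le_antisym; last exact: bot_le.
rewrite mulC; apply/residuation; exact: bot_le.
Qed.

Lemma res_top (z : A) : Defs.le z (Defs.res (Defs.bot A) (Defs.bot A)).
Proof. apply/residuation; rewrite mul_bot; exact: le_refl. Qed.

Lemma plex_lexle n (s t : seq A) : size s = n.+1 -> size t = n.+1 -> plex s t -> lexle n.+1 s t.
Proof.
elim: n s t => [|n IH] [|x s] [|y t] //=.
  by case: s; case: t => //= _ _ [].
move=> [Hs] [Ht] [Hxy Hp].
case: (classic (x = y)) => [<-|Hne]; first by right; split => //; apply: IH.
by left; split.
Qed.

Lemma plex_L n (s : seq A) : size s = n -> plex (mulk (nseq n (Defs.bot A)) s) (nseq n (Defs.bot A)).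
Proof.
elim: n s => [|n IH] [|z s] //= [Hs]; split; last exact: IH.
rewrite mul_bot; exact: le_refl.
Qed.

Lemma plex_R n (s : seq A) : size s = n -> plex s (resk (nseq n (Defs.bot A)) (nseq n (Defs.bot A))).
Proof.
elim: n s => [|n IH] [|z s] //= [Hs]; split; last exact: IH.
exact: res_top.
Qed.

Lemma canc_mul (x y : A) : Icanc x -> Icanc y -> Icanc (Defs.mul x y).
Proof.
move=> Hx Hy p q E; apply: Hx; apply: Hy.
by rewrite -!mulA.
Qed.

Lemma canc_fact (r y : A) : Icanc (Defs.mul r y) -> Icanc y.
Proof.
move=> H p q E; apply: H.
by rewrite (mulC r) !mulA E.
Qed.

Lemma Lex_resk k (a b : seq A) : size a = k.+1 -> size b = k.+1 -> good a b -> Lex k.+1 (resk a b).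
Proof.
elim: k a b => [|k IH] [|x a] [|y b] //=.
  case: a => [|? ?] // _; case: b => [|? ?] //= _ _; by exists (Defs.res x y).
move=> [Ha] [Hb] [Hc [_ Hg]].
exists (Defs.res x y), (resk a b); split => //.
by left; split => //; apply: IH.
Qed.

Lemma key k (a b c : seq A) : Lex k.+1 a -> Lex k.+1 b -> Lex k.+1 c -> good a b ->
  (lexle k.+1 (mulk b c) a <-> lexle k.+1 c (resk a b)).
Proof.
elim: k a b c => [|k IH] a b c.
  move=> [x ->] [y ->] [z ->] /= _; exact: residuation.
move=> Ha Hb Hc.
have := Lex_size _ _ Ha; have := Lex_size _ _ Hb; have := Lex_size _ _ Hc.
move: Ha Hb Hc => /= [x [a' [-> Ha]]] [y [b' [-> Hb]]] [z [c' [-> Hc]]].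
move=> [Sc] [Sb] [Sa] [Ir [Er Hg]].
set r := Defs.res x y in Ir Er *.
have Hlt : forall u v : A, (Defs.lt u v \/ u = v) <-> Defs.le u v.
  move=> u v; split; first by case=> [[]|->] //; exact: le_refl.
  by move=> H; case: (classic (u = v)) => [->|?]; [right|left].
case: (classic (Icanc y)) => Iy.
  have Ix : Icanc x by rewrite -Er; apply: canc_mul.
  have Eq : Defs.mul y z = x <-> z = r.
    split; last by move=> ->; rewrite mulC.
    by move=> E; apply: Iy; rewrite -(mulC y) E Er.
  have Hle : Defs.le (Defs.mul y z) x <-> Defs.le z r by exact: residuation.
  have Hlt2 : Defs.lt (Defs.mul y z) x <-> Defs.lt z r.
    rewrite /Defs.lt; split => -[H1 H2]; split; try tauto.
  have Ha' : Lex k.+1 a' by case: Ha => [[]|[]].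
  have Hb' : Lex k.+1 b' by case: Hb => [[]|[]].
  split.
    case=> [H|[E H]]; first by left; apply/Hlt2.
    have Ez : z = r by apply/Eq.
    have Hc' : Lex k.+1 c' by case: Hc => [[]|[H1 _]] //; rewrite Ez in H1.
    by right; split => //; apply/(IH a' b' c').
  case=> [H|[Ez H]]; first by left; apply/Hlt2.
  have Hc' : Lex k.+1 c' by case: Hc => [[]|[H1 _]] //; rewrite Ez in H1.
  by right; split; [apply/Eq|apply/(IH a' b' c')].
have Ix : ~ Icanc x by move=> Ix; apply: Iy; apply: (@canc_fact r); rewrite Er.
have Eb : b' = nseq k.+1 (Defs.bot A) by case: Hb => [[]|[]].
have Ea : a' = nseq k.+1 (Defs.bot A) by case: Ha => [[]|[]].
subst a' b'.
have L' : lexle k.+1 (mulk (nseq k.+1 (Defs.bot A)) c') (nseq k.+1 (Defs.bot A)).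
  apply: plex_lexle; last exact: plex_L.
    by rewrite size_map size_zip size_nseq Sc minnn.
  by rewrite size_nseq.
have R' : lexle k.+1 c' (resk (nseq k.+1 (Defs.bot A)) (nseq k.+1 (Defs.bot A))).
  apply: plex_lexle => //; last exact: plex_R.
  by rewrite size_map size_zip size_nseq minnn.
rewrite /=.
have := Hlt (Defs.mul y z) x; have := Hlt z r; have := @residuation A x y z.
rewrite -/r; tauto.
Qed.

Lemma good_of (a b : seq A) : size a = size b ->
  find (fun p : A * A => `[< Cnon (Defs.res p.1 p.2) >]) (zip a b) = size a ->
  find (fun p : A * A => `[< Defs.lt (Defs.mul (Defs.res p.1 p.2) p.2) p.1 >]) (zip a b) = size a ->
  good a b.
Proof.
elim: a b => [|x a IH] [|y b] //= [Sab].
case: ifP => // /negbT /asboolPn H1 [F1].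
case: ifP => // /negbT /asboolPn H2 [F2].
split; first by apply: NNPP.
split; last exact: IH.
have L : Defs.le (Defs.mul (Defs.res x y) y) x by rewrite mulC; apply/residuation; exact: le_refl.
apply: le_antisym => //.
by apply: NNPP => H; apply: H2; split => // E; apply: H; rewrite E; apply: le_refl.
Qed.

End S.

Theorem proposition2 (A : rpom) (k : nat) (a b : seq A) :
  1 <= k -> Lex k a -> Lex k b ->
  delta a b = k.+1 -> gamma a b = k.+1 ->
  Lex k (resk a b) /\
  (forall c : seq A, Lex k c -> (lexle k (mulk b c) a <-> lexle k c (resk a b))).
Proof.
case: k => // k _ Ha Hb [Hd] [Hg].
have Sa := Lex_size _ _ _ Ha; have Sb := Lex_size _ _ _ Hb.
have G : good A a b by apply: good_of; rewrite ?Sa ?Sb.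
split; first exact: (Lex_resk _ _ _ _ Sa Sb G).
by move=> c Hc; apply: (key _ _ _ _ _ Ha Hb Hc G).
Qed.
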